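(* Let $X$ be a complex Banach space and let $a,b\in\mathcal{L}(X)$ be such that $a$, $b$ and $ab$ all have g-Drazin inverses. If $a^2b=0$ and $ab^2=0$, then $a+b$ has a g-Drazin inverse.
   Context: $\mathcal{L}(X)$ denotes the Banach algebra of bounded linear operators on the complex Banach space $X$. An element $a$ of a unital Banach algebra $\mathcal{A}$ is quasinilpotent if $\lim_{n\to\infty}\|a^n\|^{1/n}=0$. An element $a\in\mathcal{A}$ has a g-Drazin (generalized Drazin) inverse if there exists $x\in\mathcal{A}$ with $x=xax$, $ax=xa$, and $a-a^2x$ quasinilpotent; such $x$ is unique and is denoted $a^d$. *)

(* Defs.v *)
From Stdlib Require Import Reals.
Open Scope R_scope.
Set Implicit Arguments.

Definition Cx : Type := (R * R)%type.
Definition Cadd (z w : Cx) : Cx := (fst z + fst w, snd z + snd w).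
Definition Cmul (z w : Cx) : Cx :=
  (fst z * fst w - snd z * snd w, fst z * snd w + snd z * fst w).
Definition C1 : Cx := (1, 0).
Definition Cmod (z : Cx) : R := sqrt (fst z * fst z + snd z * snd z).

Record CBanach := {
  car :> Type;
  vadd : car -> car -> car;
  vzero : car;
  vopp : car -> car;
  vscal : Cx -> car -> car;
  vnorm : car -> R;
  vadd_assoc : forall x y z, vadd x (vadd y z) = vadd (vadd x y) z;
  vadd_comm : forall x y, vadd x y = vadd y x;
  vadd_0 : forall x, vadd x vzero = x;
  vadd_opp : forall x, vadd x (vopp x) = vzero;
  vscal_1 : forall x, vscal C1 x = x;
  vscal_assoc : forall c d x, vscal c (vscal d x) = vscal (Cmul c d) x;
  vscal_distr_v : forall c x y, vscal c (vadd x y) = vadd (vscal c x) (vscal c y);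
  vscal_distr_c : forall c d x, vscal (Cadd c d) x = vadd (vscal c x) (vscal d x);
  vnorm_nonneg : forall x, 0 <= vnorm x;
  vnorm_eq0 : forall x, vnorm x = 0 -> x = vzero;
  vnorm_scal : forall c x, vnorm (vscal c x) = Cmod c * vnorm x;
  vnorm_triangle : forall x y, vnorm (vadd x y) <= vnorm x + vnorm y;
  v_complete : forall u : nat -> car,
    (forall eps, eps > 0 -> exists N, forall m n, (N <= m)%nat -> (N <= n)%nat ->
        vnorm (vadd (u m) (vopp (u n))) < eps) ->
    exists l, forall eps, eps > 0 -> exists N, forall n, (N <= n)%nat ->
        vnorm (vadd (u n) (vopp l)) < eps
}.

Arguments vadd {c0} _ _. Arguments vzero {c0}. Arguments vopp {c0} _.
Arguments vscal {c0} _ _. Arguments vnorm {c0} _.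

Section Ops.
Variable X : CBanach.

Definition bounded_linear (T : X -> X) : Prop :=
  (forall x y, T (vadd x y) = vadd (T x) (T y)) /\
  (forall c x, T (vscal c x) = vscal c (T x)) /\
  (exists M, forall x, vnorm (T x) <= M * vnorm x).

Definition op_zero : X -> X := fun _ => vzero.
Definition op_add (S T : X -> X) : X -> X := fun x => vadd (S x) (T x).
Definition op_sub (S T : X -> X) : X -> X := fun x => vadd (S x) (vopp (T x)).
Definition op_mul (S T : X -> X) : X -> X := fun x => S (T x).
Definition op_pow (T : X -> X) (n : nat) : X -> X :=
  Nat.iter n (fun F => op_mul T F) (fun x => x).

Definition is_opnorm (T : X -> X) (r : R) : Prop :=
  is_lub (fun y => exists x, vnorm x <= 1 /\ y = vnorm (T x)) r.

End Ops.

Arguments bounded_linear {X} T.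

Arguments op_add {X} S T _.
Arguments op_sub {X} S T _.
Arguments op_mul {X} S T _.
Arguments op_pow {X} T n _.
Arguments is_opnorm {X} T r.

Definition nroot (x : R) (n : nat) : R :=
  if Req_EM_T x 0 then 0 else Rpower x (/ INR n).

Definition quasinilpotent (X : CBanach) (T : X -> X) : Prop :=
  exists u : nat -> R, (forall n, is_opnorm (op_pow T n) (u n)) /\
    Un_cv (fun n => nroot (u n) n) 0.

Definition has_gDrazin (X : CBanach) (a : X -> X) : Prop :=
  exists x : X -> X, bounded_linear x /\
    x = op_mul x (op_mul a x) /\
    op_mul a x = op_mul x a /\
    @quasinilpotent X (op_sub a (op_mul a (op_mul a x))).
Arguments has_gDrazin {X} a.
Arguments quasinilpotent {X} T.

(* Main.v *)
Require Import Defs.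
From Stdlib Require Import Reals Lra Lia List Bool Arith FunctionalExtensionality ClassicalEpsilon.
Open Scope R_scope.

Arguments vadd_assoc {_} _ _ _. Arguments vadd_comm {_} _ _. Arguments vadd_0 {_} _.
Arguments vadd_opp {_} _. Arguments vscal_1 {_} _. Arguments vscal_assoc {_} _ _ _.
Arguments vscal_distr_v {_} _ _ _. Arguments vscal_distr_c {_} _ _ _.
Arguments vnorm_nonneg {_} _. Arguments vnorm_eq0 {_} _ _. Arguments vnorm_scal {_} _ _.
Arguments vnorm_triangle {_} _ _. Arguments v_complete {_} _ _.

Section Grp.
Variable X : CBanach.

Lemma add0l (x : X) : vadd vzero x = x.
Proof. rewrite vadd_comm; apply vadd_0. Qed.

Lemma addA' (x y z : X) : vadd (vadd x y) z = vadd x (vadd y z).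
Proof. symmetry; apply vadd_assoc. Qed.

Lemma addCA (x y z : X) : vadd x (vadd y z) = vadd y (vadd x z).
Proof. rewrite !vadd_assoc, (vadd_comm x y); reflexivity. Qed.

Definition sat := (bool * nat)%type.
Definition sem (env : list X) (s : sat) : X :=
  if fst s then nth (snd s) env vzero else vopp (nth (snd s) env vzero).
Fixpoint ssum env (l : list sat) : X :=
  match l with nil => vzero | h :: t => vadd (sem env h) (ssum env t) end.

Inductive gexp := GAtom (n : nat) | GZero | GAdd (a b : gexp) | GOpp (a : gexp).
Fixpoint geval env (e : gexp) : X :=
  match e with
  | GAtom n => nth n env vzero
  | GZero => vzero
  | GAdd a b => vadd (geval env a) (geval env b)
  | GOpp a => vopp (geval env a)
  end.
Definition negs (s : sat) : sat := (negb (fst s), snd s).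
Fixpoint flat (e : gexp) : list sat :=
  match e with
  | GAtom n => (true, n) :: nil
  | GZero => nil
  | GAdd a b => flat a ++ flat b
  | GOpp a => map negs (flat a)
  end.

Lemma opp_unique (a b : X) : vadd a b = vzero -> b = vopp a.
Proof.
  intro H. rewrite <- (add0l b), <- (vadd_opp a), (vadd_comm a (vopp a)), addA', H, vadd_0.
  reflexivity.
Qed.
Lemma oppK (a : X) : vopp (vopp a) = a.
Proof. symmetry; apply opp_unique. rewrite vadd_comm; apply vadd_opp. Qed.
Lemma oppD (a b : X) : vopp (vadd a b) = vadd (vopp a) (vopp b).
Proof.
  symmetry; apply opp_unique.
  rewrite addA', (addCA b), vadd_opp, vadd_0, vadd_opp; reflexivity.
Qed.
Lemma opp0 : vopp (@vzero X) = vzero.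
Proof. symmetry; apply opp_unique; apply vadd_0. Qed.

Lemma ssum_app env l1 l2 : ssum env (l1 ++ l2) = vadd (ssum env l1) (ssum env l2).
Proof. induction l1; simpl. rewrite add0l; auto. rewrite IHl1, addA'; auto. Qed.
Lemma sem_neg env s : sem env (negs s) = vopp (sem env s).
Proof. destruct s as [[] n]; unfold sem; simpl; rewrite ?oppK; auto. Qed.
Lemma ssum_neg env l : ssum env (map negs l) = vopp (ssum env l).
Proof. induction l; simpl. rewrite opp0; auto. rewrite IHl, sem_neg, oppD; auto. Qed.
Lemma flat_ok env e : ssum env (flat e) = geval env e.
Proof.
  induction e; simpl; auto.
  - apply vadd_0.
  - rewrite ssum_app, IHe1, IHe2; auto.
  - rewrite ssum_neg, IHe; auto.
Qed.

Definition sat_eqb (a b : sat) := Bool.eqb (fst a) (fst b) && Nat.eqb (snd a) (snd b).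
Lemma sat_eqb_ok a b : sat_eqb a b = true -> a = b.
Proof.
  destruct a as [a1 a2], b as [b1 b2]; unfold sat_eqb; simpl.
  intro H; apply andb_prop in H; destruct H as [H1 H2].
  apply eqb_prop in H1; apply Nat.eqb_eq in H2; subst; auto.
Qed.
Fixpoint fremove (x : sat) (l : list sat) : option (list sat) :=
  match l with
  | nil => None
  | y :: r => if sat_eqb x y then Some r else
      match fremove x r with Some r' => Some (y :: r') | None => None end
  end.
Lemma fremove_ok env x l l' : fremove x l = Some l' -> ssum env l = vadd (sem env x) (ssum env l').
Proof.
  revert l'; induction l as [|y r IH]; simpl; intros l' H; [discriminate|].
  destruct (sat_eqb x y) eqn:E.
  - apply sat_eqb_ok in E; subst; injection H; intro; subst; auto.
  - destruct (fremove x r) as [r'|] eqn:E2; [|discriminate].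
    injection H; intro; subst. simpl. rewrite (IH r' eq_refl). apply addCA.
Qed.
Fixpoint canc (l : list sat) : list sat :=
  match l with
  | nil => nil
  | h :: t => let t' := canc t in
      match fremove (negs h) t' with Some t'' => t'' | None => h :: t' end
  end.
Lemma canc_ok env l : ssum env (canc l) = ssum env l.
Proof.
  induction l as [|h t IH]; simpl; auto.
  destruct (fremove (negs h) (canc t)) eqn:E.
  - rewrite <- IH, (fremove_ok env _ _ _ E), sem_neg, vadd_assoc, vadd_opp, add0l; auto.
  - simpl; rewrite IH; auto.
Qed.

Lemma abel_sound env e1 e2 :
  canc (flat e1 ++ map negs (flat e2)) = nil -> geval env e1 = geval env e2.
Proof.
  intro H. assert (H2 := canc_ok env (flat e1 ++ map negs (flat e2))).
  rewrite H, ssum_app, ssum_neg, !flat_ok in H2; simpl in H2.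
  symmetry in H2. apply opp_unique in H2. apply (f_equal vopp) in H2. rewrite !oppK in H2. auto.
Qed.
End Grp.

Ltac inlist x l :=
  match l with
  | nil => constr:(false)
  | cons x _ => constr:(true)
  | cons _ ?r => inlist x r
  end.
Ltac add_atom x l :=
  match inlist x l with true => l | false => constr:(cons x l) end.
Ltac atoms t l :=
  match t with
  | @vadd _ ?a ?b => let l1 := atoms a l in atoms b l1
  | @vopp _ ?a => atoms a l
  | @vzero _ => l
  | _ => add_atom t l
  end.
Ltac idx x l :=
  match l with
  | cons x _ => constr:(O)
  | cons _ ?r => let n := idx x r in constr:(S n)
  end.
Ltac reif t l :=
  match t with
  | @vadd _ ?a ?b => let ea := reif a l in let eb := reif b l in constr:(GAdd ea eb)
  | @vopp _ ?a => let ea := reif a l in constr:(GOpp ea)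
  | @vzero _ => constr:(GZero)
  | _ => let n := idx t l in constr:(GAtom n)
  end.
Ltac abel :=
  match goal with
  | |- @eq (car ?X) ?a ?b =>
    let l0 := atoms a (@nil (car X)) in
    let l := atoms b l0 in
    let ea := reif a l in let eb := reif b l in
    change (geval X l ea = geval X l eb);
    apply abel_sound; vm_compute; reflexivity
  end.



Section B.
Variable X : CBanach.
Implicit Types (x y u v w : X) (T S : X -> X).

Lemma dbl0 (v : X) : vadd v v = v -> v = vzero.
Proof.
  intro H. transitivity (vadd (vadd v v) (vopp v)). abel. rewrite H, vadd_opp; auto.
Qed.

Lemma scal0 (v : X) : vscal (0,0) v = vzero.
Proof.
  apply dbl0. rewrite <- vscal_distr_c. f_equal. unfold Cadd; simpl; f_equal; ring.
Qed.

Lemma norm0 : vnorm (@vzero X) = 0.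
Proof.
  rewrite <- (scal0 vzero), vnorm_scal. unfold Cmod; simpl.
  rewrite Rmult_0_l, Rplus_0_l, sqrt_0; ring.
Qed.

Lemma Cmod_real r : Cmod (r, 0) = Rabs r.
Proof. unfold Cmod; simpl. rewrite Rmult_0_l, Rplus_0_r. apply sqrt_Rsqr_abs. Qed.

Lemma scalm1 (v : X) : vscal (Ropp 1, 0) v = vopp v.
Proof.
  apply opp_unique. rewrite <- (vscal_1 v) at 1. unfold C1.
  rewrite <- vscal_distr_c. rewrite <- (scal0 v). f_equal. unfold Cadd; simpl; f_equal; ring.
Qed.

Lemma norm_opp (v : X) : vnorm (vopp v) = vnorm v.
Proof. rewrite <- scalm1, vnorm_scal, Cmod_real, Rabs_Ropp, Rabs_R1; ring. Qed.

Definition vsub x y := vadd x (vopp y).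

Lemma norm_sub_sym x y : vnorm (vsub x y) = vnorm (vsub y x).
Proof. unfold vsub. rewrite <- norm_opp. f_equal. abel. Qed.

Lemma norm_sub_tri x y z : vnorm (vsub x z) <= vnorm (vsub x y) + vnorm (vsub y z).
Proof.
  unfold vsub. replace (vadd x (vopp z)) with (vadd (vadd x (vopp y)) (vadd y (vopp z))) by abel.
  apply vnorm_triangle.
Qed.

Lemma norm_tri_sub x y : vnorm x <= vnorm y + vnorm (vsub x y).
Proof.
  unfold vsub. replace x with (vadd y (vadd x (vopp y))) at 1 by abel. apply vnorm_triangle.
Qed.

Lemma sub_eq0 x y : vnorm (vsub x y) = 0 -> x = y.
Proof.
  intro H. apply vnorm_eq0 in H. unfold vsub in H.
  transitivity (vadd (vadd x (vopp y)) y). abel. rewrite H; apply add0l.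
Qed.

Lemma norm_small_0 (a : R) : 0 <= a -> (forall e, 0 < e -> a < e) -> a = 0.
Proof.
  intros H1 H2. destruct (Rle_lt_or_eq_dec 0 a H1) as [h|h]; auto.
  specialize (H2 (a/2)); lra.
Qed.

Definition addv T := forall u v, T (vadd u v) = vadd (T u) (T v).
Definition scalv T := forall c v, T (vscal c v) = vscal c (T v).
Definition bnd T M := forall v, vnorm (T v) <= M * vnorm v.
Definition lin T := addv T /\ scalv T.

Lemma lin_zero T : addv T -> T vzero = vzero.
Proof. intro H. apply dbl0. rewrite <- H, vadd_0; auto. Qed.
Lemma lin_opp T v : addv T -> T (vopp v) = vopp (T v).
Proof.
  intro H. apply opp_unique. rewrite <- H, vadd_opp. apply lin_zero; auto.
Qed.
Lemma lin_sub T u v : addv T -> T (vsub u v) = vsub (T u) (T v).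
Proof. intro H; unfold vsub; rewrite H, lin_opp; auto. Qed.

Lemma bl_lin T : bounded_linear T -> lin T.
Proof. intros [h1 [h2 _]]; split; auto. Qed.
Lemma bl_bnd T : bounded_linear T -> exists M, 0 <= M /\ bnd T M.
Proof.
  intros [_ [_ [M HM]]]. exists (Rabs M). split. apply Rabs_pos.
  intro v. eapply Rle_trans. apply HM. apply Rmult_le_compat_r. apply vnorm_nonneg. apply RRle_abs.
Qed.
Lemma bl_intro T M : lin T -> bnd T M -> bounded_linear T.
Proof. intros [h1 h2] h3. split; [|split]; auto. exists M; auto. Qed.

Definition lim_to (s : nat -> X) (l : X) :=
  forall e, 0 < e -> exists N, forall n, (N <= n)%nat -> vnorm (vsub (s n) l) < e.

Lemma lim_unique s l1 l2 : lim_to s l1 -> lim_to s l2 -> l1 = l2.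
Proof.
  intros H1 H2. apply sub_eq0. apply norm_small_0. apply vnorm_nonneg.
  intros e He. destruct (H1 (e/2)) as [N1 h1]; [lra|]. destruct (H2 (e/2)) as [N2 h2]; [lra|].
  specialize (h1 (N1+N2)%nat ltac:(lia)). specialize (h2 (N1+N2)%nat ltac:(lia)).
  eapply Rle_lt_trans. apply (norm_sub_tri _ (s (N1+N2)%nat)).
  rewrite norm_sub_sym. lra.
Qed.

Lemma lim_ext s1 s2 l : (forall n, s1 n = s2 n) -> lim_to s1 l -> lim_to s2 l.
Proof. intros E H e He. destruct (H e He) as [N h]. exists N; intros; rewrite <- E; auto. Qed.

Lemma lim_shift s l : lim_to s l -> lim_to (fun n => s (S n)) l.
Proof. intros H e He. destruct (H e He) as [N h]. exists N; intros; apply h; lia. Qed.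

Lemma lim_add s1 s2 l1 l2 : lim_to s1 l1 -> lim_to s2 l2 -> lim_to (fun n => vadd (s1 n) (s2 n)) (vadd l1 l2).
Proof.
  intros H1 H2 e He. destruct (H1 (e/2)) as [N1 h1]; [lra|]. destruct (H2 (e/2)) as [N2 h2]; [lra|].
  exists (N1+N2)%nat; intros n Hn. specialize (h1 n ltac:(lia)). specialize (h2 n ltac:(lia)).
  unfold vsub in *. replace (vadd (vadd (s1 n) (s2 n)) (vopp (vadd l1 l2))) with
    (vadd (vadd (s1 n) (vopp l1)) (vadd (s2 n) (vopp l2))).
  eapply Rle_lt_trans. apply vnorm_triangle. lra.
  rewrite oppD; abel.
Qed.

Lemma lim_const_add c s l : lim_to s l -> lim_to (fun n => vadd c (s n)) (vadd c l).
Proof.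
  intros H e He. destruct (H e He) as [N h]. exists N; intros n Hn.
  unfold vsub in *. replace (vadd (vadd c (s n)) (vopp (vadd c l))) with (vadd (s n) (vopp l)); auto.
  rewrite oppD; abel.
Qed.

Lemma lim_map T M s l : addv T -> bnd T M -> 0 <= M -> lim_to s l -> lim_to (fun n => T (s n)) (T l).
Proof.
  intros HA HB HM H e He. destruct (H (e/(M+1))) as [N h].
  apply Rdiv_lt_0_compat; lra.
  exists N; intros n Hn. rewrite <- lin_sub; auto. eapply Rle_lt_trans. apply HB.
  specialize (h n Hn). apply Rle_lt_trans with ((M+1) * vnorm (vsub (s n) l)).
  apply Rmult_le_compat_r. apply vnorm_nonneg. lra.
  apply Rmult_lt_reg_l with (/(M+1)). apply Rinv_0_lt_compat; lra.
  rewrite <- Rmult_assoc, Rinv_l, Rmult_1_l. unfold Rdiv in h; lra. lra.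
Qed.

Lemma lim_scal c s l : lim_to s l -> lim_to (fun n => vscal c (s n)) (vscal c l).
Proof.
  intro H. apply (lim_map (fun v => vscal c v) (Cmod c)); auto.
  intros u v; apply vscal_distr_v.
  intro v; rewrite vnorm_scal; lra.
  unfold Cmod; apply sqrt_pos.
Qed.

Lemma lim_norm_le s l M : lim_to s l -> (forall n, vnorm (s n) <= M) -> vnorm l <= M.
Proof.
  intros H HM. apply Rnot_lt_le; intro Hc.
  destruct (H (vnorm l - M)) as [N h]; [lra|]. specialize (h N (le_n _)).
  rewrite norm_sub_sym in h. pose proof (norm_tri_sub l (s N)). specialize (HM N). lra.
Qed.

Lemma complete_lim (s : nat -> X) :
  (forall e, 0 < e -> exists N, forall m n, (N <= m)%nat -> (N <= n)%nat -> vnorm (vsub (s m) (s n)) < e) ->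
  exists l, lim_to s l.
Proof.
  intro H. destruct (v_complete s) as [l Hl].
  intros e He; destruct (H e He) as [N h]; exists N; intros; apply h; auto.
  exists l. intros e He. destruct (Hl e He) as [N h]; exists N; auto.
Qed.

End B.

Section C.
Context {X : CBanach}.
Implicit Types (x y u v w : X) (T S : X -> X).

Lemma opow_0 T v : op_pow T 0 v = v. Proof. reflexivity. Qed.
Lemma opow_S T n v : op_pow T (S n) v = T (op_pow T n v). Proof. reflexivity. Qed.
Lemma opow_Sr T n v : op_pow T (S n) v = op_pow T n (T v).
Proof. induction n; simpl; auto. unfold op_mul. f_equal. apply IHn. Qed.
Lemma opow_add T m n v : op_pow T (m + n) v = op_pow T m (op_pow T n v).
Proof. induction m; simpl; auto. unfold op_mul; rewrite IHm; auto. Qed.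
Lemma opow_addv T n : addv X T -> addv X (op_pow T n).
Proof. intros H u v; induction n; simpl; auto. unfold op_mul; rewrite IHn; auto. Qed.
Lemma opow_scalv T n : scalv X T -> scalv X (op_pow T n).
Proof. intros H c v; induction n; simpl; auto. unfold op_mul; rewrite IHn; auto. Qed.
Lemma opow_lin T n : lin X T -> lin X (op_pow T n).
Proof. intros [h1 h2]; split; [apply opow_addv|apply opow_scalv]; auto. Qed.
Lemma opow_bnd T M n : bnd X T M -> 0 <= M -> bnd X (op_pow T n) (M ^ n).
Proof.
  intros H HM v; induction n; simpl. lra.
  unfold op_mul. eapply Rle_trans. apply H. rewrite Rmult_assoc. apply Rmult_le_compat_l; auto.
Qed.
Lemma opow_comm T S n v : (forall u, T (S u) = S (T u)) -> op_pow T n (S v) = S (op_pow T n v).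
Proof. intro H; induction n; simpl; auto. unfold op_mul; rewrite IHn; auto. Qed.
Lemma opow_mulc T S n v : (forall u, T (S u) = S (T u)) ->
  op_pow (fun u => T (S u)) n v = op_pow T n (op_pow S n v).
Proof.
  intro H; induction n; simpl; auto. unfold op_mul. rewrite IHn.
  f_equal. rewrite (opow_comm T S n); auto.
Qed.

Definition QNb T := forall eps, 0 < eps -> exists C, forall n v,
  vnorm (op_pow T n v) <= C * eps ^ n * vnorm v.

Lemma QN_intro T M : bnd X T M -> 0 <= M ->
  (forall eps, 0 < eps < 1 -> exists C N, forall n v, (N <= n)%nat ->
      vnorm (op_pow T n v) <= C * eps ^ n * vnorm v) -> QNb T.
Proof.
  intros HB HM H eps Heps.
  set (e := Rmin eps (1/2)).
  assert (He : 0 < e < 1) by (unfold e; unfold Rmin; destruct (Rle_dec eps (1/2)); lra).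
  assert (Hee : e <= eps) by (unfold e; apply Rmin_l).
  destruct (H e He) as [C [N HC]].
  set (M1 := Rmax M 1).
  assert (HM1 : 1 <= M1) by apply Rmax_r.
  assert (HM1' : M <= M1) by apply Rmax_l.
  assert (HeN : 0 < e ^ N) by (apply pow_lt; lra).
  exists (Rabs C + M1 ^ N / e ^ N). intros n v.
  assert (Hv := vnorm_nonneg (op_pow T n v)). assert (Hv' := vnorm_nonneg v).
  assert (Hen : e ^ n <= eps ^ n) by (apply pow_incr; lra).
  assert (Hen0 : 0 < e ^ n) by (apply pow_lt; lra).
  assert (HC0 : 0 <= M1 ^ N / e ^ N) by (apply Rle_mult_inv_pos; [apply pow_le; lra| lra]).
  destruct (le_lt_dec N n) as [h|h].
  - eapply Rle_trans. apply HC; auto.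
    apply Rmult_le_compat_r; auto.
    apply Rle_trans with (Rabs C * e ^ n). apply Rmult_le_compat_r; [lra|apply RRle_abs].
    apply Rle_trans with (Rabs C * eps ^ n). apply Rmult_le_compat_l; [apply Rabs_pos|lra].
    apply Rmult_le_compat_r. apply pow_le; lra. assert (0 <= Rabs C) by apply Rabs_pos. lra.
  - eapply Rle_trans. apply (opow_bnd T M n HB HM v).
    apply Rmult_le_compat_r; auto.
    assert (HeNn : e ^ N <= e ^ n).
    { replace N with (n + (N - n))%nat by lia. rewrite pow_add.
      rewrite <- (Rmult_1_r (e ^ n)) at 2. apply Rmult_le_compat_l. lra.
      rewrite <- (pow1 (N - n)). apply pow_incr; lra. }
    apply Rle_trans with (M1 ^ N).
    apply Rle_trans with (M1 ^ n). apply pow_incr; lra. apply Rle_pow; auto; lia.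
    apply Rle_trans with (M1 ^ N / e ^ N * e ^ n).
    + unfold Rdiv. rewrite Rmult_assoc. rewrite <- (Rmult_1_r (M1 ^ N)) at 1.
      apply Rmult_le_compat_l. apply pow_le; lra.
      apply Rmult_le_reg_l with (e ^ N); auto. rewrite <- Rmult_assoc, Rinv_r, Rmult_1_l, Rmult_1_r; lra.
    + apply Rle_trans with (M1 ^ N / e ^ N * eps ^ n). apply Rmult_le_compat_l; auto.
      apply Rmult_le_compat_r. apply pow_le; lra. assert (0 <= Rabs C) by apply Rabs_pos. lra.
Qed.
End C.

Lemma rpow_pow (u : R) (n : nat) : 0 < u -> (1 <= n)%nat -> (Rpower u (/ INR n)) ^ n = u.
Proof.
  intros Hu Hn. rewrite <- Rpower_pow by (unfold Rpower; apply exp_pos).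
  rewrite Rpower_mult, Rinv_l, Rpower_1; auto. apply not_0_INR; lia.
Qed.

Lemma nroot_lt (u eps : R) (n : nat) : 0 <= u -> 0 < eps -> (1 <= n)%nat -> u < eps ^ n -> nroot u n < eps.
Proof.
  intros Hu He Hn H. unfold nroot. destruct (Req_EM_T u 0); auto.
  apply Rnot_le_lt; intro Hc. assert (eps ^ n <= Rpower u (/ INR n) ^ n) by (apply pow_incr; lra).
  rewrite rpow_pow in H0; auto; lra.
Qed.

Lemma nroot_le (u eps : R) (n : nat) : 0 <= u -> 0 < eps -> (1 <= n)%nat -> nroot u n < eps -> u <= eps ^ n.
Proof.
  intros Hu He Hn H. unfold nroot in H. destruct (Req_EM_T u 0).
  subst; apply pow_le; lra.
  rewrite <- (rpow_pow u n) by (auto; lra). apply pow_incr. split; [|lra].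
  unfold Rpower; left; apply exp_pos.
Qed.

Section E.
Context {X : CBanach}.
Implicit Types (x y u v w : X) (T S : X -> X).

Lemma opnorm_bnd T r : lin X T -> is_opnorm T r -> bnd X T r.
Proof.
  intros [HA HS] [Hub _] v.
  destruct (Req_EM_T (vnorm v) 0) as [h|h].
  - apply vnorm_eq0 in h. subst. rewrite (lin_zero X T HA), !norm0. lra.
  - assert (Hp : 0 < vnorm v) by (assert (Hn := vnorm_nonneg v); lra).
    set (w := vscal (/ vnorm v, 0) v).
    assert (Hw : vnorm w = 1).
    { unfold w. rewrite vnorm_scal, Cmod_real, Rabs_right. field; lra.
      left; apply Rinv_0_lt_compat; auto. }
    assert (H1 : vnorm (T w) <= r). { apply Hub. exists w; split; auto; lra. }
    unfold w in H1. rewrite HS, vnorm_scal, Cmod_real, Rabs_right in H1.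
    2: left; apply Rinv_0_lt_compat; auto.
    apply Rmult_le_reg_l with (/ vnorm v). apply Rinv_0_lt_compat; auto.
    rewrite <- Rmult_assoc, (Rmult_comm _ r), Rmult_assoc, Rinv_l, Rmult_1_r; lra.
Qed.

Lemma opnorm_nonneg T r : addv X T -> is_opnorm T r -> 0 <= r.
Proof.
  intros HA [Hub _]. rewrite <- norm0 with (X := X) at 1. rewrite <- (lin_zero X T HA).
  apply Hub. exists vzero. rewrite norm0; split; auto; lra.
Qed.

Lemma QN_of_quasi T : bounded_linear T -> quasinilpotent T -> QNb T.
Proof.
  intros HT [u [Hu Hc]].
  destruct (bl_bnd X T HT) as [M [HM0 HM]].
  apply (QN_intro T M HM HM0). intros eps He.
  destruct (Hc eps ltac:(lra)) as [N HN].
  exists 1, (N + 1)%nat. intros n v Hn.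
  assert (Hl := opow_lin T n (bl_lin X T HT)).
  eapply Rle_trans. apply (opnorm_bnd _ _ Hl (Hu n)).
  apply Rmult_le_compat_r. apply vnorm_nonneg. rewrite Rmult_1_l.
  apply nroot_le; try lra; try lia. apply (opnorm_nonneg _ _ (proj1 Hl) (Hu n)).
  specialize (HN n ltac:(lia)). unfold Rdist in HN. rewrite Rminus_0_r in HN.
  eapply Rle_lt_trans. apply RRle_abs. auto.
Qed.

Lemma opnorm_exists T : addv X T -> (exists M, forall v, vnorm (T v) <= M * vnorm v) ->
  exists r, is_opnorm T r.
Proof.
  intros HA [M HM].
  destruct (completeness (fun z : R => exists x, vnorm x <= 1 /\ z = vnorm (T x))) as [r Hr].
  - exists (Rabs M). intros z [x [h1 h2]]. subst. eapply Rle_trans. apply HM.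
    assert (0 <= vnorm x) by apply vnorm_nonneg.
    apply Rle_trans with (Rabs M * vnorm x). apply Rmult_le_compat_r; auto. apply RRle_abs.
    rewrite <- (Rmult_1_r (Rabs M)) at 2. apply Rmult_le_compat_l; auto. apply Rabs_pos.
  - exists (vnorm (T vzero)). exists vzero; rewrite norm0; split; auto; lra.
  - exists r; exact Hr.
Qed.

Lemma quasi_of_QN T : bounded_linear T -> QNb T -> quasinilpotent T.
Proof.
  intros HT HQ.
  assert (Hex : forall n, exists r, is_opnorm (op_pow T n) r).
  { intro n. apply opnorm_exists. apply opow_addv, (bl_lin X T HT).
    destruct (HQ 1 ltac:(lra)) as [C HC]. exists (C * 1 ^ n). intro v; apply HC. }
  exists (fun n => proj1_sig (constructive_indefinite_description _ (Hex n))).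
  split. intro n; destruct (constructive_indefinite_description _ _); auto.
  intros eps He.
  destruct (HQ (eps / 2) ltac:(lra)) as [C HC].
  destruct (pow_lt_1_zero (1/2) ltac:(rewrite Rabs_right; lra) (/ (Rabs C + 1))) as [N HN].
  apply Rinv_0_lt_compat; assert (0 <= Rabs C) by apply Rabs_pos; lra.
  exists (N + 1)%nat. intros n Hn.
  destruct (constructive_indefinite_description _ _) as [r Hr]. simpl.
  assert (Hr0 : 0 <= r) by (apply (opnorm_nonneg _ _ (opow_addv T n (proj1 HT)) Hr)).
  assert (Hrb : r <= Rabs C * (eps / 2) ^ n).
  { destruct Hr as [_ Hlub]. apply Hlub. intros z [x [h1 h2]]. subst.
    eapply Rle_trans. apply HC. assert (0 <= vnorm x) by apply vnorm_nonneg.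
    assert (0 <= (eps/2) ^ n) by (apply pow_le; lra).
    apply Rle_trans with (Rabs C * (eps / 2) ^ n * vnorm x).
    apply Rmult_le_compat_r; auto. apply Rmult_le_compat_r; auto. apply RRle_abs.
    rewrite <- (Rmult_1_r (Rabs C * (eps / 2) ^ n)) at 2. apply Rmult_le_compat_l; auto.
    apply Rmult_le_pos; auto. apply Rabs_pos. }
  unfold Rdist. rewrite Rminus_0_r.
  assert (Hnr : 0 <= nroot r n).
  { unfold nroot; destruct (Req_EM_T r 0). lra. unfold Rpower; left; apply exp_pos. }
  rewrite Rabs_right by lra.
  apply nroot_lt; auto; try lia.
  eapply Rle_lt_trans. apply Hrb.
  specialize (HN n ltac:(lia)). rewrite Rabs_right in HN by (apply Rle_ge, pow_le; lra).
  replace (eps / 2) with (1/2 * eps) by field. rewrite Rpow_mult_distr.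
  assert (0 < eps ^ n) by (apply pow_lt; lra). assert (0 <= Rabs C) by apply Rabs_pos.
  assert (0 < (1/2) ^ n) by (apply pow_lt; lra).
  assert (Rabs C * (1/2) ^ n < 1).
  { apply Rmult_lt_reg_l with (/ (Rabs C + 1)). apply Rinv_0_lt_compat; lra.
    apply Rle_lt_trans with ((1/2)^n). rewrite <- Rmult_assoc.
    rewrite <- (Rmult_1_l ((1/2)^n)) at 2. apply Rmult_le_compat_r. lra.
    apply Rmult_le_reg_l with (Rabs C + 1). lra. rewrite <- Rmult_assoc, Rinv_r, Rmult_1_l, Rmult_1_r; lra.
    rewrite Rmult_1_r; auto. }
  rewrite <- Rmult_assoc. rewrite <- (Rmult_1_l (eps ^ n)) at 2.
  apply Rmult_lt_compat_r; auto.
Qed.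
End E.

Section D.
Variable X : CBanach.
Implicit Types (x y u v w : X) (T S : X -> X).

Section Ser.
Variables (B G Cc : X -> X) (D rho : R).
Hypotheses (HB : lin X B) (HG : lin X G) (HC : lin X Cc) (MB : R) (HMB : bnd X B MB) (HMB0 : 0 <= MB)
  (HD : 0 <= D) (Hr : 0 <= rho < 1)
  (Hbound : forall n v, vnorm (op_pow B n (Cc (op_pow G n v))) <= D * rho ^ n * vnorm v).

Let Tn n v := op_pow B n (Cc (op_pow G n v)).
Fixpoint Ps (N : nat) (v : X) : X :=
  match N with O => vzero | S N => vadd (Ps N v) (Tn N v) end.

Lemma Tn_add n : addv X (Tn n).
Proof.
  intros u v; unfold Tn. rewrite (opow_addv G n (proj1 HG)), (proj1 HC), (opow_addv B n (proj1 HB)); auto.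
Qed.
Lemma Tn_scal n : scalv X (Tn n).
Proof.
  intros c v; unfold Tn. rewrite (opow_scalv G n (proj2 HG)), (proj2 HC), (opow_scalv B n (proj2 HB)); auto.
Qed.
Lemma Ps_add N : addv X (Ps N).
Proof. intros u v; induction N; simpl. abel. rewrite IHN, Tn_add. abel. Qed.
Lemma Ps_scal N : scalv X (Ps N).
Proof.
  intros c v; induction N; simpl. symmetry. rewrite <- (scal0 X vzero). rewrite vscal_assoc.
  unfold Cmul; simpl. f_equal. f_equal; ring.
  rewrite IHN, Tn_scal, vscal_distr_v; auto.
Qed.

Lemma Ps_diff n m v : (n <= m)%nat ->
  vnorm (vsub X (Ps m v) (Ps n v)) <= D * vnorm v * (rho ^ n - rho ^ m) / (1 - rho).
Proof.
  intro H. induction H.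
  - unfold vsub. rewrite vadd_opp, norm0. unfold Rminus. rewrite Rplus_opp_r, Rmult_0_r.
    unfold Rdiv; rewrite Rmult_0_l; lra.
  - simpl. unfold vsub in *.
    replace (vadd (vadd (Ps m v) (Tn m v)) (vopp (Ps n v))) with
      (vadd (vadd (Ps m v) (vopp (Ps n v))) (Tn m v)) by abel.
    eapply Rle_trans. apply vnorm_triangle.
    assert (h := Hbound m v). fold (Tn m v) in h.
    apply Rle_trans with (D * vnorm v * (rho ^ n - rho ^ m) / (1 - rho) + D * rho ^ m * vnorm v).
    lra. right. field. lra.
Qed.

Lemma Ps_cauchy v : exists l, lim_to X (fun N => Ps N v) l.
Proof.
  apply complete_lim. intros e He.
  assert (Hv := vnorm_nonneg v).
  set (K := D * vnorm v / (1 - rho) + 1).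
  assert (HK : 0 < K). { unfold K. assert (0 <= D * vnorm v / (1 - rho)).
    apply Rle_mult_inv_pos. apply Rmult_le_pos; auto. lra. lra. }
  destruct (pow_lt_1_zero rho ltac:(rewrite Rabs_right; lra) (e / K)) as [N HN].
  apply Rdiv_lt_0_compat; auto.
  exists N. intros m n Hm Hn.
  assert (gen : forall a b, (N <= a)%nat -> (a <= b)%nat -> vnorm (vsub X (Ps b v) (Ps a v)) < e).
  { intros a b Ha Hab. eapply Rle_lt_trans. apply Ps_diff; auto.
    specialize (HN a Ha). rewrite Rabs_right in HN by (apply Rle_ge, pow_le; lra).
    assert (0 <= rho ^ b) by (apply pow_le; lra).
    apply Rle_lt_trans with (D * vnorm v / (1 - rho) * rho ^ a).
    { unfold Rdiv. replace (D * vnorm v * (rho ^ a - rho ^ b) * / (1 - rho)) with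
        (D * vnorm v * / (1 - rho) * (rho ^ a - rho ^ b)) by ring.
      apply Rmult_le_compat_l. apply Rmult_le_pos. apply Rmult_le_pos; auto.
      left; apply Rinv_0_lt_compat; lra. lra. }
    apply Rle_lt_trans with (K * rho ^ a). apply Rmult_le_compat_r. apply pow_le; lra. unfold K; lra.
    apply Rmult_lt_reg_l with (/ K). apply Rinv_0_lt_compat; auto.
    rewrite <- Rmult_assoc, Rinv_l, Rmult_1_l. unfold Rdiv in HN. lra. lra. }
  destruct (le_lt_dec n m).
  - apply gen; auto.
  - rewrite norm_sub_sym. apply gen; auto. lia.
Qed.

Definition Ssum (v : X) : X := proj1_sig (constructive_indefinite_description _ (Ps_cauchy v)).
Lemma Ssum_lim v : lim_to X (fun N => Ps N v) (Ssum v).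
Proof. unfold Ssum. destruct (constructive_indefinite_description _ _); auto. Qed.

Lemma Ssum_bl : bounded_linear Ssum.
Proof.
  apply (bl_intro X Ssum (D / (1 - rho))). split.
  - intros u v. apply (lim_unique X (fun N => Ps N (vadd u v))). apply Ssum_lim.
    apply (lim_ext X (fun N => vadd (Ps N u) (Ps N v))). intro; symmetry; apply Ps_add.
    apply lim_add; apply Ssum_lim.
  - intros c v. apply (lim_unique X (fun N => Ps N (vscal c v))). apply Ssum_lim.
    apply (lim_ext X (fun N => vscal c (Ps N v))). intro; symmetry; apply Ps_scal.
    apply lim_scal; apply Ssum_lim.
  - intro v. apply (lim_norm_le X (fun N => Ps N v)). apply Ssum_lim.
    intro N. assert (h := Ps_diff 0 N v ltac:(lia)). unfold vsub in h. simpl in h.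
    rewrite opp0, vadd_0 in h. eapply Rle_trans. apply h.
    assert (0 <= rho ^ N) by (apply pow_le; lra). assert (Hv := vnorm_nonneg v).
    unfold Rdiv. replace (D * vnorm v * (1 - rho ^ N) * / (1 - rho)) with
      ((D * / (1 - rho)) * vnorm v * (1 - rho ^ N)) by ring.
    rewrite <- (Rmult_1_r (D * / (1 - rho) * vnorm v)) at 2. apply Rmult_le_compat_l.
    apply Rmult_le_pos; auto. apply Rmult_le_pos; auto. left; apply Rinv_0_lt_compat; lra. lra.
Qed.

Lemma Ps_fix N v : Ps (S N) v = vadd (Cc v) (B (Ps N (G v))).
Proof.
  induction N.
  - simpl. unfold Tn. simpl. rewrite (lin_zero X B (proj1 HB)). abel.
  - change (Ps (S (S N)) v) with (vadd (Ps (S N) v) (Tn (S N) v)). rewrite IHN.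
    simpl Ps. rewrite (proj1 HB). unfold Tn. rewrite opow_S, opow_Sr. abel.
Qed.

Lemma Ssum_fix v : Ssum v = vadd (Cc v) (B (Ssum (G v))).
Proof.
  apply (lim_unique X (fun N => Ps (S N) v)). apply (lim_shift X (fun N => Ps N v)), Ssum_lim.
  apply (lim_ext X (fun N => vadd (Cc v) (B (Ps N (G v))))). intro; symmetry; apply Ps_fix.
  apply lim_const_add. apply (lim_map X B MB); auto. apply HB. apply Ssum_lim.
Qed.
End Ser.

Lemma series_fix (B G Cc : X -> X) (D rho : R) :
  bounded_linear B -> bounded_linear G -> bounded_linear Cc -> 0 <= D -> 0 <= rho < 1 ->
  (forall n v, vnorm (op_pow B n (Cc (op_pow G n v))) <= D * rho ^ n * vnorm v) ->
  exists S, bounded_linear S /\ forall v, S v = vadd (Cc v) (B (S (G v))).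
Proof.
  intros HB HG HC HD Hr Hb. destruct (bl_bnd X B HB) as [MB [HMB0 HMB]].
  exists (Ssum B G Cc D rho HD Hr Hb).
  split. apply Ssum_bl; apply bl_lin; auto. intro v. apply (Ssum_fix B G Cc D rho (bl_lin X B HB) MB HMB HMB0).
Qed.
End D.

Lemma geo_zero (a D rho : R) : 0 <= a -> 0 <= rho < 1 -> (forall n, a <= D * rho ^ n) -> a = 0.
Proof.
  intros Ha Hr H. apply norm_small_0; auto. intros e He.
  destruct (pow_lt_1_zero rho ltac:(rewrite Rabs_right; lra) (e / (Rabs D + 1))) as [N HN].
  apply Rdiv_lt_0_compat; auto. assert (0 <= Rabs D) by apply Rabs_pos. lra.
  specialize (HN N (le_n _)). rewrite Rabs_right in HN by (apply Rle_ge, pow_le; lra).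
  eapply Rle_lt_trans. apply (H N).
  assert (0 <= rho ^ N) by (apply pow_le; lra). assert (0 <= Rabs D) by apply Rabs_pos.
  apply Rle_lt_trans with ((Rabs D + 1) * rho ^ N).
  apply Rmult_le_compat_r; auto. assert (D <= Rabs D) by apply RRle_abs. lra.
  apply Rmult_lt_reg_l with (/ (Rabs D + 1)). apply Rinv_0_lt_compat; lra.
  rewrite <- Rmult_assoc, Rinv_l, Rmult_1_l. unfold Rdiv in HN; lra. lra.
Qed.

Lemma chain3 (C a m k nv e : R) : 0 <= a -> 0 <= m -> 0 <= nv -> m <= k * nv -> a * k <= e ->
  C * a * m <= Rabs C * e * nv.
Proof.
  intros Ha Hm Hnv H1 H2. assert (HC : C <= Rabs C) by apply RRle_abs. assert (0 <= Rabs C) by apply Rabs_pos.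
  apply Rle_trans with (Rabs C * a * m). apply Rmult_le_compat_r; auto. apply Rmult_le_compat_r; auto.
  apply Rle_trans with (Rabs C * a * (k * nv)). apply Rmult_le_compat_l; auto. apply Rmult_le_pos; auto.
  replace (Rabs C * a * (k * nv)) with (Rabs C * (a * k) * nv) by ring.
  apply Rmult_le_compat_r; auto. apply Rmult_le_compat_l; auto.
Qed.

Lemma INR_le_pow2 n : INR (S n) <= 2 ^ n.
Proof. induction n. simpl; lra. rewrite S_INR. change (2 ^ S n) with (2 * 2 ^ n). assert (1 <= 2 ^ n) by (apply pow_R1_Rle; lra). lra. Qed.

Section F.
Context {X : CBanach}.
Implicit Types (x y u v w : X) (T S Z : X -> X).

Lemma QN_conj Z T L R KL KR : bounded_linear Z -> QNb T -> bnd X L KL -> bnd X R KR -> 0 <= KL -> 0 <= KR ->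
  (forall n v, op_pow Z (S n) v = L (op_pow T n (R v))) -> QNb Z.
Proof.
  intros HZ HT HL HR HKL HKR H.
  destruct (bl_bnd X Z HZ) as [M [HM0 HM]]. apply (QN_intro Z M HM HM0).
  intros eps He. destruct (HT eps ltac:(lra)) as [C HC].
  exists (KL * Rabs C * KR / eps), 1%nat. intros n v Hn.
  destruct n as [|n]; [lia|]. rewrite H.
  eapply Rle_trans. apply HL. assert (0 <= vnorm v) by apply vnorm_nonneg.
  assert (0 < eps ^ n) by (apply pow_lt; lra).
  apply Rle_trans with (KL * (Rabs C * eps ^ n * (KR * vnorm v))).
  apply Rmult_le_compat_l; auto. eapply Rle_trans. apply HC.
  apply Rle_trans with (Rabs C * eps ^ n * vnorm (R v)). apply Rmult_le_compat_r. apply vnorm_nonneg.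
  apply Rmult_le_compat_r. lra. apply RRle_abs.
  apply Rmult_le_compat_l. apply Rmult_le_pos. apply Rabs_pos. lra. apply HR.
  right. simpl. field. lra.
Qed.

Lemma QN_commprod Z T M : bounded_linear T -> bounded_linear M -> QNb T ->
  (forall v, T (M v) = M (T v)) -> (forall v, Z v = T (M v)) -> QNb Z.
Proof.
  intros HT HMl HQ Hc HZ.
  destruct (bl_bnd X M HMl) as [K [HK0 HK]].
  destruct (bl_bnd X T HT) as [KT [HKT0 HKT]].
  assert (HZl : bounded_linear Z).
  { apply (bl_intro X Z (KT * K)). split.
    intros u v; rewrite !HZ, (proj1 (bl_lin X M HMl)), (proj1 (bl_lin X T HT)); auto.
    intros c v; rewrite !HZ, (proj2 (bl_lin X M HMl)), (proj2 (bl_lin X T HT)); auto.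
    intro v; rewrite HZ. eapply Rle_trans. apply HKT. rewrite Rmult_assoc. apply Rmult_le_compat_l; auto. }
  destruct (bl_bnd X Z HZl) as [MZ [HMZ0 HMZ]]. apply (QN_intro Z MZ HMZ HMZ0).
  intros eps He. destruct (HQ (eps / (K + 1)) ltac:(apply Rdiv_lt_0_compat; lra)) as [C HC].
  exists (Rabs C), 0%nat. intros n v _.
  assert (Hzz : op_pow Z n v = op_pow (fun u => T (M u)) n v).
  { induction n; simpl; auto. unfold op_mul; rewrite IHn, HZ; auto. }
  rewrite Hzz, opow_mulc; auto.
  eapply Rle_trans. apply HC. apply (chain3 _ _ _ (K ^ n)).
  apply pow_le; left; apply Rdiv_lt_0_compat; lra. apply vnorm_nonneg. apply vnorm_nonneg.
  apply opow_bnd; auto.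
  rewrite <- Rpow_mult_distr. apply pow_incr. split. apply Rmult_le_pos; auto. left; apply Rdiv_lt_0_compat; lra.
  unfold Rdiv. rewrite Rmult_assoc. rewrite <- (Rmult_1_r eps) at 2. apply Rmult_le_compat_l. lra.
  apply Rmult_le_reg_l with (K + 1). lra. rewrite <- Rmult_assoc, Rinv_r, Rmult_1_l; lra.
Qed.

Lemma QN_sum A B : bounded_linear A -> bounded_linear B -> QNb A -> QNb B ->
  (forall v, B (A v) = vzero) -> QNb (op_add A B).
Proof.
  intros HA HB QA QB H0.
  assert (HAl := bl_lin X A HA). assert (HBl := bl_lin X B HB).
  assert (HS : bounded_linear (op_add A B)).
  { destruct (bl_bnd X A HA) as [KA [HKA0 HKA]]. destruct (bl_bnd X B HB) as [KB [HKB0 HKB]].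
    apply (bl_intro X _ (KA + KB)). split.
    intros u v; unfold op_add. rewrite (proj1 HAl), (proj1 HBl). abel.
    intros c v; unfold op_add. rewrite (proj2 HAl), (proj2 HBl), vscal_distr_v; auto.
    intro v; unfold op_add. eapply Rle_trans. apply vnorm_triangle. specialize (HKA v); specialize (HKB v). lra. }
  assert (HSv : forall w, op_add A B w = vadd (A w) (B w)) by reflexivity.
  assert (HBS : forall n v, B (op_pow (op_add A B) n v) = op_pow B (S n) v).
  { induction n; intro v. reflexivity.
    rewrite opow_S, HSv, (proj1 HBl), H0, add0l, IHn. reflexivity. }
  assert (Hrec : forall n v, op_pow (op_add A B) (S n) v = vadd (A (op_pow (op_add A B) n v)) (op_pow B (S n) v)).
  { intros n v. rewrite opow_S, HSv, HBS. auto. }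
  destruct (bl_bnd X _ HS) as [M [HM0 HM]]. apply (QN_intro _ M HM HM0).
  intros eps He. destruct (QA (eps/2) ltac:(lra)) as [CA HCA]. destruct (QB (eps/2) ltac:(lra)) as [CB HCB].
  set (d := eps / 2). assert (Hd : 0 < d) by (unfold d; lra).
  set (CA' := Rabs CA + 1). set (CB' := Rabs CB + 1).
  assert (HCA1 : 1 <= CA') by (unfold CA'; assert (0 <= Rabs CA) by apply Rabs_pos; lra).
  assert (HCB1 : 1 <= CB') by (unfold CB'; assert (0 <= Rabs CB) by apply Rabs_pos; lra).
  assert (Hn1 : forall m w, vnorm (op_pow A m w) <= CA' * d^m * vnorm w).
  { intros m w. eapply Rle_trans. apply HCA. apply Rmult_le_compat_r. apply vnorm_nonneg.
    apply Rmult_le_compat_r. apply pow_le; lra. unfold CA'; assert (CA <= Rabs CA) by apply RRle_abs; lra. }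
  assert (Hn2 : forall m w, vnorm (op_pow B m w) <= CB' * d^m * vnorm w).
  { intros m w. eapply Rle_trans. apply HCB. apply Rmult_le_compat_r. apply vnorm_nonneg.
    apply Rmult_le_compat_r. apply pow_le; lra. unfold CB'; assert (CB <= Rabs CB) by apply RRle_abs; lra. }
  assert (key : forall n m v, vnorm (op_pow A m (op_pow (op_add A B) n v)) <=
                INR (S n) * (CA' * CB') * d ^ (m + n) * vnorm v).
  { induction n; intros m v.
    - simpl op_pow at 2. eapply Rle_trans. apply Hn1.
      rewrite Nat.add_0_r. simpl INR.
      assert (0 <= d^m) by (apply pow_le; lra). assert (0 <= vnorm v) by apply vnorm_nonneg.
      apply Rmult_le_compat_r; auto. rewrite Rmult_1_l. apply Rmult_le_compat_r; auto.
      rewrite <- (Rmult_1_r CA') at 1. apply Rmult_le_compat_l; lra.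
    - rewrite Hrec, (opow_addv A m (proj1 HAl)). eapply Rle_trans. apply vnorm_triangle.
      rewrite <- opow_Sr. eapply Rle_trans. apply Rplus_le_compat. apply IHn. apply Hn1.
      assert (0 <= d^m) by (apply pow_le; lra). assert (0 <= vnorm v) by apply vnorm_nonneg.
      assert (Hb : vnorm (op_pow B (S n) v) <= CB' * d^(S n) * vnorm v) by apply Hn2.
      replace (S m + n)%nat with (m + S n)%nat by lia. rewrite (S_INR (S n)).
      rewrite pow_add in *. simpl pow in *.
      assert (0 <= d^n) by (apply pow_le; lra).
      assert (CA' * d ^ m * vnorm (op_pow B (S n) v) <= CA' * d^m * (CB' * (d * d^n) * vnorm v)).
      { apply Rmult_le_compat_l; auto. apply Rmult_le_pos; lra. }
      nra. }
  exists (CA' * CB'), 0%nat. intros n v _.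
  specialize (key n 0%nat v). simpl op_pow at 1 in key. simpl plus in key.
  eapply Rle_trans. apply key.
  assert (0 <= vnorm v) by apply vnorm_nonneg.
  apply Rmult_le_compat_r; auto. rewrite (Rmult_comm (INR (S n))), Rmult_assoc.
  apply Rmult_le_compat_l. nra.
  apply Rle_trans with (2 ^ n * d ^ n). apply Rmult_le_compat_r. apply pow_le; lra. apply INR_le_pow2.
  rewrite <- Rpow_mult_distr. unfold d. right; f_equal; field.
Qed.

Lemma QN_half Z W : bounded_linear Z -> QNb W ->
  (forall k v, op_pow Z (2 * k) v = op_pow W k v) -> QNb Z.
Proof.
  intros HZ HW H.
  destruct (bl_bnd X Z HZ) as [M [HM0 HM]]. apply (QN_intro Z M HM HM0).
  intros eps He. destruct (HW (eps * eps) ltac:(nra)) as [C HC].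
  assert (HC0 : 0 <= Rabs C) by apply Rabs_pos.
  exists (Rabs C * (M + 1) / eps), 0%nat. intros n v _.
  assert (Hv : 0 <= vnorm v) by apply vnorm_nonneg.
  assert (Hb : forall k, vnorm (op_pow Z (2 * k) v) <= Rabs C * eps ^ (2 * k) * vnorm v).
  { intro k. rewrite H. eapply Rle_trans. apply HC. rewrite pow_mult. simpl (eps ^ 2).
    rewrite Rmult_1_r. apply Rmult_le_compat_r; auto. apply Rmult_le_compat_r.
    apply pow_le; nra. apply RRle_abs. }
  assert (Hq : Rabs C <= Rabs C * (M + 1) / eps).
  { unfold Rdiv. rewrite Rmult_assoc. rewrite <- (Rmult_1_r (Rabs C)) at 1. apply Rmult_le_compat_l; auto.
    apply Rmult_le_reg_l with eps. lra. rewrite <- Rmult_assoc, (Rmult_comm eps (M+1)), Rmult_assoc, Rinv_r; lra. }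
  destruct (Nat.Even_or_Odd n) as [[k Hk]|[k Hk]]; subst n.
  - eapply Rle_trans. apply Hb. apply Rmult_le_compat_r; auto. apply Rmult_le_compat_r; auto.
    apply pow_le; lra.
  - rewrite Nat.add_1_r, opow_S. eapply Rle_trans. apply HM.
    apply Rle_trans with (M * (Rabs C * eps ^ (2 * k) * vnorm v)). apply Rmult_le_compat_l; auto.
    assert (0 <= eps ^ (2 * k)) by (apply pow_le; lra).
    change (eps ^ S (2 * k)) with (eps * eps ^ (2 * k)).
    replace (Rabs C * (M + 1) / eps * (eps * eps ^ (2 * k)) * vnorm v) with
      ((M + 1) * (Rabs C * eps ^ (2 * k) * vnorm v)) by (field; lra).
    apply Rmult_le_compat_r. apply Rmult_le_pos; auto. apply Rmult_le_pos; auto. lra.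
Qed.
End F.

Section G.
Context {X : CBanach}.
Implicit Types (u v w : X) (T S Z : X -> X).

Lemma bl_comp S T : bounded_linear S -> bounded_linear T -> bounded_linear (fun v => S (T v)).
Proof.
  intros HS HT. destruct (bl_bnd X S HS) as [K1 [H1 B1]]. destruct (bl_bnd X T HT) as [K2 [H2 B2]].
  destruct (bl_lin X S HS) as [a1 s1]. destruct (bl_lin X T HT) as [a2 s2].
  apply (bl_intro X _ (K1 * K2)). split; intros ? ?; [rewrite a2, a1|rewrite s2, s1]; auto.
  intro v. eapply Rle_trans. apply B1. rewrite Rmult_assoc. apply Rmult_le_compat_l; auto.
Qed.
Lemma bl_add S T : bounded_linear S -> bounded_linear T -> bounded_linear (fun v => vadd (S v) (T v)).
Proof.
  intros HS HT. destruct (bl_bnd X S HS) as [K1 [H1 B1]]. destruct (bl_bnd X T HT) as [K2 [H2 B2]].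
  destruct (bl_lin X S HS) as [a1 s1]. destruct (bl_lin X T HT) as [a2 s2].
  apply (bl_intro X _ (K1 + K2)). split; intros ? ?.
  rewrite a2, a1; abel. rewrite s2, s1, vscal_distr_v; auto.
  intro v. eapply Rle_trans. apply vnorm_triangle. specialize (B1 v); specialize (B2 v). lra.
Qed.
Lemma bl_opp S : bounded_linear S -> bounded_linear (fun v => vopp (S v)).
Proof.
  intros HS. destruct (bl_bnd X S HS) as [K1 [H1 B1]].
  destruct (bl_lin X S HS) as [a1 s1].
  apply (bl_intro X _ K1). split; intros ? ?.
  rewrite a1, oppD; auto. rewrite s1, <- !scalm1, !vscal_assoc. f_equal. unfold Cmul; simpl. f_equal; ring.
  intro v. rewrite norm_opp. auto.
Qed.
Lemma bl_sub S T : bounded_linear S -> bounded_linear T -> bounded_linear (fun v => vsub X (S v) (T v)).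
Proof. intros; unfold vsub; apply bl_add; auto; apply bl_opp; auto. Qed.
Lemma bl_id : bounded_linear (fun v : X => v).
Proof. apply (bl_intro X _ 1). split; intros ? ?; auto. intro; lra. Qed.
Lemma bl_ext S T : (forall v, S v = T v) -> bounded_linear S -> bounded_linear T.
Proof. intros H; replace T with S; auto. apply functional_extensionality; auto. Qed.
Lemma QN_ext S T : (forall v, S v = T v) -> QNb S -> QNb T.
Proof. intros H; replace T with S; auto. apply functional_extensionality; auto. Qed.

Definition GD (a x : X -> X) := bounded_linear x /\ (forall v, x (a (x v)) = x v) /\
  (forall v, a (x v) = x (a v)) /\ QNb (fun v => vsub X (a v) (a (a (x v)))).

Lemma GD_of_has a : bounded_linear a -> has_gDrazin a -> exists x, GD a x.
Proof.
  intros Ha [x [Hx [H1 [H2 H3]]]]. exists x. split; [|split;[|split]]; auto.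
  - intro v. change (x (a (x v))) with (op_mul x (op_mul a x) v). rewrite <- H1; auto.
  - intro v. change (a (x v)) with (op_mul a x v). rewrite H2; auto.
  - apply QN_of_quasi; auto. unfold op_sub, op_mul. apply bl_sub; auto.
    apply bl_comp; auto. apply bl_comp; auto.
Qed.

Lemma has_of_GD a x : bounded_linear a -> GD a x -> has_gDrazin a.
Proof.
  intros Ha [Hx [H1 [H2 H3]]]. exists x. split; [|split;[|split]]; auto.
  - apply functional_extensionality; intro v. unfold op_mul; auto.
  - apply functional_extensionality; intro v. unfold op_mul; auto.
  - apply quasi_of_QN. unfold op_sub, op_mul. apply bl_sub; auto. apply bl_comp; auto. apply bl_comp; auto.
    exact H3.
Qed.

Lemma GD_ext a a' x : (forall v, a v = a' v) -> GD a x -> GD a' x.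
Proof. intros H; replace a' with a; auto. apply functional_extensionality; auto. Qed.

Lemma series_QNl B G Cc : bounded_linear B -> bounded_linear G -> bounded_linear Cc -> QNb B ->
  exists S, bounded_linear S /\ forall v, S v = vadd (Cc v) (B (S (G v))).
Proof.
  intros HB HG HC HQ.
  destruct (bl_bnd X G HG) as [K [HK0 HK]]. destruct (bl_bnd X Cc HC) as [Kc [HKc0 HKc]].
  destruct (HQ (/ (2 * (K + 1))) ltac:(apply Rinv_0_lt_compat; lra)) as [C HC'].
  apply (series_fix X B G Cc (Rabs C * Kc) (1/2)); auto.
  apply Rmult_le_pos; auto; apply Rabs_pos. lra.
  intros n v. eapply Rle_trans. apply HC'.
  assert (h : vnorm (Cc (op_pow G n v)) <= Kc * (K ^ n * vnorm v)).
  { eapply Rle_trans. apply HKc. apply Rmult_le_compat_l; auto. apply opow_bnd; auto. }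
  assert (0 <= (/ (2 * (K + 1))) ^ n) by (apply pow_le; left; apply Rinv_0_lt_compat; lra).
  apply Rle_trans with (Rabs C * (/ (2 * (K + 1))) ^ n * (Kc * (K ^ n * vnorm v))).
  apply Rle_trans with (Rabs C * (/ (2 * (K + 1))) ^ n * vnorm (Cc (op_pow G n v))).
  apply Rmult_le_compat_r. apply vnorm_nonneg. apply Rmult_le_compat_r; auto. apply RRle_abs.
  apply Rmult_le_compat_l; auto. apply Rmult_le_pos; auto. apply Rabs_pos.
  replace (Rabs C * (/ (2 * (K + 1))) ^ n * (Kc * (K ^ n * vnorm v))) with
    (Rabs C * Kc * ((/ (2 * (K + 1))) * K) ^ n * vnorm v) by (rewrite Rpow_mult_distr; ring).
  apply Rmult_le_compat_r. apply vnorm_nonneg. apply Rmult_le_compat_l.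
  apply Rmult_le_pos; auto; apply Rabs_pos. apply pow_incr. split.
  apply Rmult_le_pos; auto. left; apply Rinv_0_lt_compat; lra.
  apply Rmult_le_reg_l with (2 * (K + 1)). lra. rewrite <- Rmult_assoc, Rinv_r; lra.
Qed.

Lemma series_QNr B G Cc : bounded_linear B -> bounded_linear G -> bounded_linear Cc -> QNb G ->
  exists S, bounded_linear S /\ forall v, S v = vadd (Cc v) (B (S (G v))).
Proof.
  intros HB HG HC HQ.
  destruct (bl_bnd X B HB) as [K [HK0 HK]]. destruct (bl_bnd X Cc HC) as [Kc [HKc0 HKc]].
  destruct (HQ (/ (2 * (K + 1))) ltac:(apply Rinv_0_lt_compat; lra)) as [C HC'].
  apply (series_fix X B G Cc (Rabs C * Kc) (1/2)); auto.
  apply Rmult_le_pos; auto; apply Rabs_pos. lra.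
  intros n v. eapply Rle_trans. apply (opow_bnd B K n HK HK0).
  assert (0 <= K ^ n) by (apply pow_le; auto).
  assert (h : vnorm (Cc (op_pow G n v)) <= Kc * (Rabs C * (/ (2 * (K + 1))) ^ n * vnorm v)).
  { eapply Rle_trans. apply HKc. apply Rmult_le_compat_l; auto. eapply Rle_trans. apply HC'.
    apply Rmult_le_compat_r. apply vnorm_nonneg. apply Rmult_le_compat_r.
    apply pow_le; left; apply Rinv_0_lt_compat; lra. apply RRle_abs. }
  apply Rle_trans with (K ^ n * (Kc * (Rabs C * (/ (2 * (K + 1))) ^ n * vnorm v))).
  apply Rmult_le_compat_l; auto.
  replace (K ^ n * (Kc * (Rabs C * (/ (2 * (K + 1))) ^ n * vnorm v))) with
    (Rabs C * Kc * ((/ (2 * (K + 1))) * K) ^ n * vnorm v) by (rewrite Rpow_mult_distr; ring).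
  apply Rmult_le_compat_r. apply vnorm_nonneg. apply Rmult_le_compat_l.
  apply Rmult_le_pos; auto; apply Rabs_pos. apply pow_incr. split.
  apply Rmult_le_pos; auto. left; apply Rinv_0_lt_compat; lra.
  apply Rmult_le_reg_l with (2 * (K + 1)). lra. rewrite <- Rmult_assoc, Rinv_r; lra.
Qed.
Lemma mix_l B G Cc : bounded_linear G -> bounded_linear Cc -> QNb B ->
  exists D, 0 <= D /\ forall n v, vnorm (op_pow B n (Cc (op_pow G n v))) <= D * (1/2) ^ n * vnorm v.
Proof.
  intros HG HC HQ.
  destruct (bl_bnd X G HG) as [K [HK0 HK]]. destruct (bl_bnd X Cc HC) as [Kc [HKc0 HKc]].
  destruct (HQ (/ (2 * (K + 1))) ltac:(apply Rinv_0_lt_compat; lra)) as [C HC'].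
  exists (Rabs C * Kc). split. apply Rmult_le_pos; auto; apply Rabs_pos.
  intros n v. eapply Rle_trans. apply HC'.
  assert (h : vnorm (Cc (op_pow G n v)) <= Kc * (K ^ n * vnorm v)).
  { eapply Rle_trans. apply HKc. apply Rmult_le_compat_l; auto. apply opow_bnd; auto. }
  assert (0 <= (/ (2 * (K + 1))) ^ n) by (apply pow_le; left; apply Rinv_0_lt_compat; lra).
  apply Rle_trans with (Rabs C * (/ (2 * (K + 1))) ^ n * (Kc * (K ^ n * vnorm v))).
  apply Rle_trans with (Rabs C * (/ (2 * (K + 1))) ^ n * vnorm (Cc (op_pow G n v))).
  apply Rmult_le_compat_r. apply vnorm_nonneg. apply Rmult_le_compat_r; auto. apply RRle_abs.
  apply Rmult_le_compat_l; auto. apply Rmult_le_pos; auto. apply Rabs_pos.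
  replace (Rabs C * (/ (2 * (K + 1))) ^ n * (Kc * (K ^ n * vnorm v))) with
    (Rabs C * Kc * ((/ (2 * (K + 1))) * K) ^ n * vnorm v) by (rewrite Rpow_mult_distr; ring).
  apply Rmult_le_compat_r. apply vnorm_nonneg. apply Rmult_le_compat_l.
  apply Rmult_le_pos; auto; apply Rabs_pos. apply pow_incr. split.
  apply Rmult_le_pos; auto. left; apply Rinv_0_lt_compat; lra.
  apply Rmult_le_reg_l with (2 * (K + 1)). lra. rewrite <- Rmult_assoc, Rinv_r; lra.
Qed.

Lemma mix_r B G Cc : bounded_linear B -> bounded_linear Cc -> QNb G ->
  exists D, 0 <= D /\ forall n v, vnorm (op_pow B n (Cc (op_pow G n v))) <= D * (1/2) ^ n * vnorm v.
Proof.
  intros HB HC HQ.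
  destruct (bl_bnd X B HB) as [K [HK0 HK]]. destruct (bl_bnd X Cc HC) as [Kc [HKc0 HKc]].
  destruct (HQ (/ (2 * (K + 1))) ltac:(apply Rinv_0_lt_compat; lra)) as [C HC'].
  exists (Rabs C * Kc). split. apply Rmult_le_pos; auto; apply Rabs_pos.
  intros n v. eapply Rle_trans. apply (opow_bnd B K n HK HK0).
  assert (0 <= K ^ n) by (apply pow_le; auto).
  assert (h : vnorm (Cc (op_pow G n v)) <= Kc * (Rabs C * (/ (2 * (K + 1))) ^ n * vnorm v)).
  { eapply Rle_trans. apply HKc. apply Rmult_le_compat_l; auto. eapply Rle_trans. apply HC'.
    apply Rmult_le_compat_r. apply vnorm_nonneg. apply Rmult_le_compat_r.
    apply pow_le; left; apply Rinv_0_lt_compat; lra. apply RRle_abs. }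
  apply Rle_trans with (K ^ n * (Kc * (Rabs C * (/ (2 * (K + 1))) ^ n * vnorm v))).
  apply Rmult_le_compat_l; auto.
  replace (K ^ n * (Kc * (Rabs C * (/ (2 * (K + 1))) ^ n * vnorm v))) with
    (Rabs C * Kc * ((/ (2 * (K + 1))) * K) ^ n * vnorm v) by (rewrite Rpow_mult_distr; ring).
  apply Rmult_le_compat_r. apply vnorm_nonneg. apply Rmult_le_compat_l.
  apply Rmult_le_pos; auto; apply Rabs_pos. apply pow_incr. split.
  apply Rmult_le_pos; auto. left; apply Rinv_0_lt_compat; lra.
  apply Rmult_le_reg_l with (2 * (K + 1)). lra. rewrite <- Rmult_assoc, Rinv_r; lra.
Qed.
End G.

Ltac blt := repeat first [ assumption | apply bl_id | apply bl_sub | apply bl_add | apply bl_opp | apply bl_comp ].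

Ltac push := repeat match goal with
 | H : forall u v, ?T (vadd u v) = _ |- context [?T (vadd _ _)] => rewrite H
 | H : forall u v, ?T (vadd u v) = _ |- context [?T (vopp ?w)] => rewrite (lin_opp _ T w H)
 | H : forall u v, ?T (vadd u v) = _ |- context [?T vzero] => rewrite (lin_zero _ T H)
 end.

Section H.
Context {X : CBanach}.
Implicit Types (u v : X).

Lemma GD_square a x : bounded_linear a -> GD a x -> GD (fun v => a (a v)) (fun v => x (x v)).
Proof.
  intros Ha [Hx [H1 [H2 H3]]].
  destruct (bl_lin X a Ha) as [aA aS]. destruct (bl_lin X x Hx) as [xA xS].
  unfold addv in *.
  assert (H1' : forall v, x (x (a v)) = x v). { intro v. rewrite <- H2. apply H1. }
  split; [|split;[|split]].
  - blt.
  - intro v. rewrite ?H2, ?H1'. reflexivity.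
  - intro v. rewrite ?H2. reflexivity.
  - set (r := fun v => vsub X (a v) (a (a (x v)))) in H3.
    apply (QN_commprod _ r (fun v => vadd (a v) (a (a (x v))))); auto.
    unfold r; blt. blt.
    + intro v. unfold r, vsub. push. rewrite ?H2, ?H1'. abel.
    + intro v. unfold r, vsub. push. rewrite ?H2, ?H1'. abel.
Qed.

Lemma GD_cline a b w : bounded_linear a -> bounded_linear b -> GD (fun v => a (b v)) w ->
  GD (fun v => b (a v)) (fun v => b (w (w (a v)))).
Proof.
  intros Ha Hb [Hw [W1 [W2 W3]]].
  destruct (bl_lin X a Ha) as [aA aS]. destruct (bl_lin X b Hb) as [bA bS].
  destruct (bl_lin X w Hw) as [wA wS].
  unfold addv in *.
  assert (W1' : forall v, w (w (a (b v))) = w v). { intro v. rewrite <- W2. apply W1. }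
  split; [|split;[|split]].
  - blt.
  - intro v. rewrite ?W2, ?W1'. reflexivity.
  - intro v. rewrite ?W2. reflexivity.
  - set (r := fun v => vsub X (a (b v)) (a (b (a (b (w v)))))) in W3.
    set (pi := fun v => vsub X v (a (b (w v)))).
    assert (Hpi : forall z, pi (a (b z)) = r z).
    { intro z. unfold pi, r, vsub. rewrite ?W2. reflexivity. }
    apply (QN_ext (fun v => b (pi (a v)))).
    { intro v. unfold pi, vsub. push. rewrite ?W2, ?W1'. reflexivity. }
    destruct (bl_bnd X b Hb) as [Kb [Kb0 HKb]].
    assert (Hpa : bounded_linear (fun v => pi (a v))) by (unfold pi; blt).
    destruct (bl_bnd X _ Hpa) as [Kp [Kp0 HKp]].
    apply (QN_conj _ r b (fun v => pi (a v)) Kb Kp); auto.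
    unfold pi; blt.
    intros n v. induction n. reflexivity.
    rewrite opow_S, IHn. rewrite Hpi. reflexivity.
Qed.
End H.

Section I.
Context {X : CBanach}.
Implicit Types (u v : X).

Lemma vanish (y : X) D c (F : nat -> X) : 0 <= D -> 0 <= c -> (forall n, y = F (S n)) ->
  (forall n, vnorm (F n) <= D * (1/2) ^ n * c) -> y = vzero.
Proof.
  intros HD Hc H1 H2. apply vnorm_eq0. apply (geo_zero _ (D * c) (1/2)). apply vnorm_nonneg. lra.
  intro n. rewrite (H1 n). eapply Rle_trans. apply H2.
  assert (0 <= (1/2)^n) by (apply pow_le; lra).
  assert (0 <= D * c * (1/2)^n) by (repeat apply Rmult_le_pos; auto).
  replace (D * (1/2) ^ (S n) * c) with (D * c * (1/2)^n * (1/2)) by (simpl; ring). lra.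
Qed.

Lemma GD_sqrt s w : bounded_linear s -> GD (fun v => s (s v)) w -> GD s (fun v => s (w v)).
Proof.
  intros Hs [Hw [W1 [W2 W3]]].
  destruct (bl_lin X s Hs) as [sA sS]. destruct (bl_lin X w Hw) as [wA wS].
  unfold addv in *.
  assert (W1' : forall v, w (w (s (s v))) = w v). { intro v. rewrite <- W2. apply W1. }
  set (t := fun v => s (s v)) in *.
  set (pi := fun v => vsub X v (s (s (w v)))).
  set (P := fun v => s (s (w v))).
  set (Q := fun v => s (s (pi v))).
  assert (Hpi : bounded_linear pi) by (unfold pi; blt).
  assert (HQ : bounded_linear Q) by (unfold Q, pi; blt).
  assert (Ht : bounded_linear t) by (unfold t; blt).
  assert (QQ : QNb Q). { refine (QN_ext _ Q _ W3). intro v. unfold Q, pi, vsub. push. reflexivity. }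
  assert (F1 : forall u, t (pi u) = pi (t u)). { intro u. unfold t, pi, vsub. push. rewrite ?W2. reflexivity. }
  assert (F2 : forall u, pi (pi u) = pi u). { intro u. unfold pi, vsub. push. rewrite ?W2, ?W1'. abel. }
  assert (Fts : forall u, t (s u) = s (t u)) by reflexivity.
  assert (FPt : forall u, P (t u) = t (P u)). { intro u. unfold P, t. rewrite ?W2. reflexivity. }
  assert (FPw : forall u, P (w u) = w (P u)). { intro u. unfold P. rewrite ?W2, ?W1'. reflexivity. }
  assert (FPP : forall u, P (P u) = P u). { intro u. unfold P. rewrite ?W2, ?W1'. reflexivity. }
  assert (Fwt : forall u, w (t u) = P u). { intro u. unfold P, t. rewrite ?W2. reflexivity. }
  assert (Ftw : forall u, t (w u) = P u) by reflexivity.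
  assert (Fdec : forall u, vadd (pi u) (P u) = u). { intro u. unfold pi, P, vsub. abel. }
  assert (F4 : forall n y, op_pow Q n (pi y) = op_pow t n (pi y)).
  { induction n; intro y. reflexivity. rewrite !opow_S, IHn.
    change (Q (op_pow t n (pi y))) with (t (pi (op_pow t n (pi y)))).
    rewrite <- (opow_comm t pi n) by (intro; apply F1). rewrite F2. reflexivity. }
  assert (F5 : forall n y, op_pow w n (op_pow t n (P y)) = P y).
  { induction n; intro y. reflexivity. rewrite opow_Sr, opow_S, Fwt.
    rewrite <- (opow_comm t P n) by (intro; symmetry; apply FPt). rewrite FPP. apply IHn. }
  assert (F6 : forall n z, op_pow w (S n) (op_pow t (S n) z) = P z).
  { intros n z. rewrite opow_Sr, opow_S, Fwt.
    rewrite <- (opow_comm t P n) by (intro; symmetry; apply FPt). apply F5. }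
  assert (F5' : forall n y, op_pow t n (op_pow w n (P y)) = P y).
  { induction n; intro y. reflexivity. rewrite opow_Sr, opow_S, Ftw.
    rewrite <- (opow_comm w P n) by (intro; symmetry; apply FPw). rewrite FPP. apply IHn. }
  assert (F6' : forall n z, op_pow t (S n) (op_pow w (S n) z) = P z).
  { intros n z. rewrite opow_Sr, opow_S, Ftw.
    rewrite <- (opow_comm w P n) by (intro; symmetry; apply FPw). apply F5'. }
  assert (Z1 : forall v, P (s (pi v)) = vzero).
  { intro v. destruct (mix_r w Q s Hw Hs QQ) as [D [HD HB]].
    apply (vanish _ D (vnorm (pi v)) (fun n => op_pow w n (s (op_pow Q n (pi v))))); auto.
    apply vnorm_nonneg.
    intro n. rewrite <- (F6 n), F4. f_equal. apply opow_comm; auto. }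
  assert (Z2 : forall v, pi (s (P v)) = vzero).
  { intro v. assert (Hps : bounded_linear (fun u => pi (s u))) by (unfold pi; blt).
    destruct (mix_l Q w (fun u => pi (s u)) Hw Hps QQ) as [D [HD HB]].
    apply (vanish _ D (vnorm v) (fun n => op_pow Q n (pi (s (op_pow w n v))))); auto.
    apply vnorm_nonneg.
    intro n. rewrite <- (F6' n), F4. rewrite (opow_comm t pi) by (intro; apply F1).
    f_equal. rewrite <- (opow_comm t s); auto. }
  assert (pA : addv X pi) by (apply (bl_lin X pi Hpi)).
  assert (Hsp : forall v, s (pi v) = pi (s v)).
  { intro v. transitivity (pi (s (pi v))).
    rewrite <- (Fdec (s (pi v))) at 1. rewrite Z1. apply vadd_0.
    rewrite <- (Fdec v) at 2. rewrite sA, pA, Z2. symmetry; apply vadd_0. }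
  assert (FdP : forall u, P u = vsub X u (pi u)). { intro u. unfold pi, P, vsub. abel. }
  assert (Hcomm : forall v, s (w v) = w (s v)).
  { intro v. assert (h1 : pi (w v) = vzero). { unfold pi, vsub. rewrite ?W2, ?W1'. apply vadd_opp. }
    assert (h2 : s (w v) = P (s (w v))).
    { rewrite <- (Fdec (s (w v))) at 1. rewrite <- Hsp, h1, (lin_zero X s sA). apply add0l. }
    assert (h3 : P (s v) = s (P v)).
    { rewrite !FdP, (lin_sub X s v (pi v) sA), Hsp. reflexivity. }
    assert (h4 : forall y, w (P y) = w y). { intro y. unfold P. rewrite ?W2, ?W1'. reflexivity. }
    rewrite h2, <- (h4 (s v)), h3. unfold P. rewrite ?W2, ?W1'. reflexivity. }
  split; [|split;[|split]].
  - blt.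
  - intro v. rewrite W1. reflexivity.
  - intro v. rewrite Hcomm. reflexivity.
  - apply (QN_ext (fun v => s (pi v))).
    { intro v. unfold pi, vsub. push. reflexivity. }
    apply (QN_half _ Q). unfold pi; blt. auto.
    induction k; intro v. reflexivity.
    replace (2 * S k)%nat with (S (S (2 * k))) by lia. rewrite !opow_S, IHk.
    change (s (pi (s (pi (op_pow Q k v))))) with (s (pi (s (pi (op_pow Q k v))))).
    rewrite <- Hsp, F2. reflexivity.
Qed.
End I.

Ltac nzw R := repeat progress (unfold vsub in *; push; R).

Section J.
Context {X : CBanach}.
Implicit Types (u v : X).

Lemma GD_pq0 p q x y : bounded_linear p -> bounded_linear q -> GD p x -> GD q y ->
  (forall v, p (q v) = vzero) -> exists z, GD (fun v => vadd (p v) (q v)) z.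
Proof.
  intros Hp Hq [Hx [X1 [X2 X3]]] [Hy [Y1 [Y2 Y3]]] Hpq.
  destruct (bl_lin X p Hp) as [pA pS]. destruct (bl_lin X q Hq) as [qA qS].
  destruct (bl_lin X x Hx) as [xA xS]. destruct (bl_lin X y Hy) as [yA yS].
  unfold addv in *.
  assert (X1' : forall v, x (x (p v)) = x v). { intro v. rewrite <- X2. apply X1. }
  assert (Y1' : forall v, y (y (q v)) = y v). { intro v. rewrite <- Y2. apply Y1. }
  assert (L3 : forall v, x (q v) = vzero).
  { intro v. rewrite <- (X1' (q v)), Hpq. push. reflexivity. }
  assert (L4 : forall v, p (y v) = vzero).
  { intro v. assert (h : y v = q (y (y v))) by (rewrite ?Y2, Y1'; reflexivity).
    rewrite h, Hpq. reflexivity. }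
  assert (L5 : forall v, x (y v) = vzero).
  { intro v. rewrite <- (X1' (y v)), L4. push. reflexivity. }
  assert (Qpe : QNb (fun v => p (vsub X v (x (p v))))).
  { refine (QN_ext _ _ _ X3). intro v. unfold vsub. push. rewrite X2. reflexivity. }
  assert (Qqf : QNb (fun v => q (vsub X v (y (q v))))).
  { refine (QN_ext _ _ _ Y3). intro v. unfold vsub. push. rewrite Y2. reflexivity. }
  destruct (series_QNl (fun v => q (vsub X v (y (q v)))) x (fun v => vsub X (x v) (y (q (x v)))))
    as [U [HUbl HU]]; try (blt; fail); auto.
  destruct (series_QNr y (fun v => p (vsub X v (x (p v)))) (fun v => y (vsub X v (x (p v)))))
    as [V [HVbl HV]]; try (blt; fail); auto.
  cbv beta in HU, HV.
  destruct (bl_lin X U HUbl) as [UA US]. destruct (bl_lin X V HVbl) as [VA VS].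
  unfold addv in UA, VA.
  assert (U1 : forall v, U (x (p v)) = U v).
  { intro v. rewrite (HU (x (p v))). nzw ltac:(rewrite ?X2, ?Y2, ?X1', ?Y1', ?Hpq, ?L3, ?L4, ?L5). rewrite (HU v). nzw ltac:(rewrite ?X2, ?Y2, ?X1', ?Y1', ?Hpq, ?L3, ?L4, ?L5). reflexivity. }
  assert (U2 : forall v, y (q (U v)) = vzero).
  { intro v. rewrite (HU v). nzw ltac:(rewrite ?X2, ?Y2, ?X1', ?Y1', ?Hpq, ?L3, ?L4, ?L5). abel. }
  assert (U2b : forall v, y (q (q (U v))) = vzero).
  { intro v. rewrite <- (Y2 (q (U v))), U2. push. reflexivity. }
  assert (U2c : forall v, y (q (q (q (U v)))) = vzero).
  { intro v. rewrite <- (Y2 (q (q (U v)))), U2b. push. reflexivity. }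
  assert (U3 : forall v, p (U v) = x (p v)).
  { intro v. rewrite (HU v). nzw ltac:(rewrite ?X2, ?Y2, ?X1', ?Y1', ?Hpq, ?L3, ?L4, ?L5). abel. }
  assert (U4 : forall v, U (p v) = vadd (vsub X (x (p v)) (y (q (x (p v))))) (q (U v))).
  { intro v. rewrite (HU (p v)). nzw ltac:(rewrite ?X2, ?Y2, ?X1', ?Y1', ?Hpq, ?L3, ?L4, ?L5, ?U1, ?U2, ?U2b). abel. }
  assert (U5 : forall v, y (U v) = vzero).
  { intro v. rewrite <- (Y1' (U v)), U2. push. reflexivity. }
  assert (U6 : forall v, U (y v) = vzero).
  { intro v. rewrite (HU (y v)). nzw ltac:(rewrite ?X2, ?Y2, ?X1', ?Y1', ?Hpq, ?L3, ?L4, ?L5). abel. }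
  assert (U7 : forall v, U (q v) = vzero).
  { intro v. rewrite (HU (q v)). nzw ltac:(rewrite ?X2, ?Y2, ?X1', ?Y1', ?Hpq, ?L3, ?L4, ?L5). abel. }
  assert (V1 : forall v, V (vsub X v (x (p v))) = V v).
  { intro v. rewrite (HV (vsub X v (x (p v)))), (HV v). nzw ltac:(rewrite ?X2, ?Y2, ?X1', ?Y1', ?Hpq, ?L3, ?L4, ?L5). abel. }
  assert (V5 : forall v, V (x v) = vzero).
  { intro v. rewrite <- (V1 (x v)). nzw ltac:(rewrite ?X2, ?Y2, ?X1', ?Y1', ?Hpq, ?L3, ?L4, ?L5). abel. }
  assert (V2 : forall v, V (q v) = y (q v)).
  { intro v. rewrite (HV (q v)). nzw ltac:(rewrite ?X2, ?Y2, ?X1', ?Y1', ?Hpq, ?L3, ?L4, ?L5, ?V5). abel. }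
  assert (V3 : forall v, y (q (V v)) = V v).
  { intro v. rewrite (HV v). nzw ltac:(rewrite ?X2, ?Y2, ?X1', ?Y1', ?Hpq, ?L3, ?L4, ?L5). abel. }
  assert (V4 : forall v, x (V v) = vzero).
  { intro v. rewrite (HV v). nzw ltac:(rewrite ?X2, ?Y2, ?X1', ?Y1', ?Hpq, ?L3, ?L4, ?L5). abel. }
  assert (V6 : forall v, p (V v) = vzero).
  { intro v. rewrite (HV v). nzw ltac:(rewrite ?X2, ?Y2, ?X1', ?Y1', ?Hpq, ?L3, ?L4, ?L5). abel. }
  assert (V9 : forall v, q (V v) = vadd (y (q (vsub X v (x (p v))))) (V (p (vsub X v (x (p v)))))).
  { intro v. rewrite (HV v). push. rewrite ?Y2, ?V3. reflexivity. }
  assert (U10 : forall v, U (V v) = vzero).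
  { intro v. rewrite (HV v). nzw ltac:(rewrite ?X2, ?Y2, ?X1', ?Y1', ?Hpq, ?L3, ?L4, ?L5, ?U6). abel. }
  assert (V11 : forall v, V (y v) = y (y v)).
  { intro v. rewrite (HV (y v)). nzw ltac:(rewrite ?X2, ?Y2, ?X1', ?Y1', ?Hpq, ?L3, ?L4, ?L5, ?V5). abel. }
  assert (V12 : forall v, V (V v) = y (V v)).
  { intro v. rewrite (HV (V v)). nzw ltac:(rewrite ?X2, ?Y2, ?X1', ?Y1', ?Hpq, ?L3, ?L4, ?L5, ?V5, ?V6). abel. }
  exists (fun v => vadd (U v) (V v)).
  assert (G2 : forall v, vadd (p (vadd (U v) (V v))) (q (vadd (U v) (V v))) =
     vadd (U (vadd (p v) (q v))) (V (vadd (p v) (q v)))).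
  { intro v. nzw ltac:(rewrite ?X2, ?Y2, ?X1', ?Y1', ?Hpq, ?L3, ?L4, ?L5, ?U1, ?U2, ?U2b, ?U2c, ?U3, ?U4, ?U5, ?U6, ?U7, ?U10, ?V2, ?V3, ?V4, ?V5, ?V6, ?V9, ?V11, ?V12). abel. }
  assert (G1 : forall v, vadd (U (vadd (p (vadd (U v) (V v))) (q (vadd (U v) (V v)))))
                              (V (vadd (p (vadd (U v) (V v))) (q (vadd (U v) (V v))))) = vadd (U v) (V v)).
  { intro v. nzw ltac:(rewrite ?X2, ?Y2, ?X1', ?Y1', ?Hpq, ?L3, ?L4, ?L5, ?U1, ?U2, ?U2b, ?U2c, ?U3, ?U4, ?U5, ?U6, ?U7, ?U10, ?V2, ?V3, ?V4, ?V5, ?V6, ?V9, ?V11, ?V12). rewrite (HV v). nzw ltac:(rewrite ?X2, ?Y2, ?X1', ?Y1', ?Hpq, ?L3, ?L4, ?L5, ?U1, ?U2, ?U2b, ?U2c, ?U3, ?U4, ?U5, ?U6, ?U7, ?U10, ?V2, ?V3, ?V4, ?V5, ?V6, ?V9, ?V11, ?V12). abel. }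
  split; [|split;[|split]].
  - blt.
  - exact G1.
  - exact G2.
  - pose (pi := fun v => vsub X v (vadd (p (vadd (U v) (V v))) (q (vadd (U v) (V v))))).
    pose (qf := fun v => q (vsub X v (y (q v)))).
    pose (pe := fun v => p (vsub X v (x (p v)))).
    pose (A := fun v => qf (pi v)).
    pose (B := fun v => pi (pe v)).
    assert (Hpi : bounded_linear pi) by (unfold pi; blt).
    assert (Hqf : bounded_linear qf) by (unfold qf; blt).
    assert (Hpe : bounded_linear pe) by (unfold pe; blt).
    assert (HA : bounded_linear A) by (unfold A; blt).
    assert (HB : bounded_linear B) by (unfold B; blt).
    assert (PIqf : forall u, pi (qf u) = qf u).
    { intro u. unfold pi, qf. nzw ltac:(rewrite ?X2, ?Y2, ?X1', ?Y1', ?Hpq, ?L3, ?L4, ?L5, ?U1, ?U2, ?U2b, ?U2c, ?U3, ?U4, ?U5, ?U6, ?U7, ?U10, ?V2, ?V3, ?V4, ?V5, ?V6, ?V9, ?V11, ?V12). abel. }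
    assert (PEpi : forall u, pe (pi u) = pe u).
    { intro u. unfold pi, pe. nzw ltac:(rewrite ?X2, ?Y2, ?X1', ?Y1', ?Hpq, ?L3, ?L4, ?L5, ?U1, ?U2, ?U2b, ?U2c, ?U3, ?U4, ?U5, ?U6, ?U7, ?U10, ?V2, ?V3, ?V4, ?V5, ?V6, ?V9, ?V11, ?V12). abel. }
    apply (QN_ext (op_add A B)).
    { intro v. unfold op_add, A, B, pi, qf, pe. nzw ltac:(rewrite ?X2, ?Y2, ?X1', ?Y1', ?Hpq, ?L3, ?L4, ?L5, ?U1, ?U2, ?U2b, ?U2c, ?U3, ?U4, ?U5, ?U6, ?U7, ?U10, ?V2, ?V3, ?V4, ?V5, ?V6, ?V9, ?V11, ?V12). abel. }
    destruct (bl_bnd X qf Hqf) as [K1 [K10 HK1]]. destruct (bl_bnd X pi Hpi) as [K2 [K20 HK2]].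
    destruct (bl_bnd X pe Hpe) as [K3 [K30 HK3]].
    apply QN_sum; auto.
    + apply (QN_conj A qf qf pi K1 K2); auto.
      intros n v. induction n. reflexivity.
      rewrite opow_S, IHn. unfold A at 1. rewrite PIqf. reflexivity.
    + apply (QN_conj B pe pi pe K2 K3); auto.
      intros n v. induction n. reflexivity.
      rewrite opow_S, IHn. unfold B at 1. rewrite PEpi. reflexivity.
    + intro v. unfold A, B, pi, qf, pe. nzw ltac:(rewrite ?X2, ?Y2, ?X1', ?Y1', ?Hpq, ?L3, ?L4, ?L5, ?U1, ?U2, ?U2b, ?U2c, ?U3, ?U4, ?U5, ?U6, ?U7, ?U10, ?V2, ?V3, ?V4, ?V5, ?V6, ?V9, ?V11, ?V12). abel.
Qed.
End J.

Theorem corollary2p3 (X : CBanach) (a b : X -> X) :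
  bounded_linear a -> bounded_linear b ->
  has_gDrazin a -> has_gDrazin b -> has_gDrazin (op_mul a b) ->
  op_mul a (op_mul a b) = op_zero X ->
  op_mul a (op_mul b b) = op_zero X ->
  has_gDrazin (op_add a b).
Proof.
  intros Ha Hb Da Db Dab H1 H2.
  assert (E1 : forall v, a (a (b v)) = vzero).
  { intro v. exact (f_equal (fun F => F v) H1). }
  assert (E2 : forall v, a (b (b v)) = vzero).
  { intro v. exact (f_equal (fun F => F v) H2). }
  destruct (bl_lin X a Ha) as [aA aS]. destruct (bl_lin X b Hb) as [bA bS].
  unfold addv in aA, bA.
  set (c := fun v => vadd (a v) (b v)).
  assert (Hc : bounded_linear c) by (unfold c; blt).
  destruct (GD_of_has a Ha Da) as [xa Ga].
  destruct (GD_of_has b Hb Db) as [xb Gb].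
  destruct (GD_of_has (fun v => a (b v)) ltac:(blt) Dab) as [w Gab].
  destruct (GD_pq0 (fun v => a (a v)) (fun v => a (b v)) _ w ltac:(blt) ltac:(blt)
     (GD_square a xa Ha Ga) Gab) as [z1 G1].
  { intro v. rewrite E1. apply (lin_zero X a aA). }
  assert (G1' : GD (fun v => a (c v)) z1).
  { refine (GD_ext _ _ _ _ G1). intro v. unfold c. rewrite aA. reflexivity. }
  assert (G2 := GD_cline a c z1 Ha Hc G1').
  assert (Gba := GD_cline a b w Ha Hb Gab).
  destruct (GD_pq0 (fun v => b (a v)) (fun v => b (b v)) _ _ ltac:(blt) ltac:(blt)
     Gba (GD_square b xb Hb Gb)) as [z2 G3].
  { intro v. rewrite E2. apply (lin_zero X b bA). }
  assert (G3' : GD (fun v => b (c v)) z2).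
  { refine (GD_ext _ _ _ _ G3). intro v. unfold c. rewrite bA. reflexivity. }
  assert (G4 := GD_cline b c z2 Hb Hc G3').
  destruct (GD_pq0 (fun v => c (a v)) (fun v => c (b v)) _ _ ltac:(blt) ltac:(blt) G2 G4) as [z3 G5].
  { intro v. unfold c. rewrite aA, E1, E2, add0l. push. apply add0l. }
  assert (G5' : GD (fun v => c (c v)) z3).
  { refine (GD_ext _ _ _ _ G5). intro v. unfold c at 2. unfold c. push. abel. }
  apply (has_of_GD c _ Hc (GD_sqrt c z3 Hc G5')).
Qed.
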